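(* Let $\alpha>0$, $\eta=\alpha/(L+\alpha)$, $z_0\in\mathrm{dom}\, f^*$, and consider GCG: for $k\ge0$, $\bar z_k=\mathrm{argmin}_{v}\{\langle-\nabla(h^\alpha)^*(-z_k),v\rangle+f^*(v)\}$, $z_{k+1}=\eta\bar z_k+(1-\eta)z_k$. Let $S(z)=\max_{v\in\mathbb{R}^n}\{\langle-\nabla(h^\alpha)^*(-z),z-v\rangle+f^*(z)-f^*(v)\}$. Then for all $k\ge0$, $\psi^\alpha(z_{k+1})\le\psi^\alpha(z_k)-\eta S(z_k)$.
   Context: Let $\|\cdot\|$ be a norm on $\mathbb{R}^n$ with dual norm $\|\cdot\|_*$. Let $f:\mathbb{R}^n\to\mathbb{R}$ be convex, differentiable and $L$-smooth ($L>0$) with respect to $\|\cdot\|$, $h:\mathbb{R}^n\to(-\infty,\infty]$ closed proper convex with bounded domain, and $w:\mathbb{R}^n\to[0,+\infty]$ closed, $1$-strongly convex with respect to $\|\cdot\|$ on $\mathrm{dom}\, h$, with $\max_{\mathrm{dom}\, h}w<\infty$. Let $h^\alpha=h+\alpha w$ and $\psi^\alpha(z)=(h^\alpha)^*(-z)+f^*(z)$, with $^*$ the convex conjugate; $(h^\alpha)^*$ is differentiable with $(1/\alpha)$-Lipschitz gradient w.r.t. $\|\cdot\|_*$ and $f^*$ is $(1/L)$-strongly convex w.r.t. $\|\cdot\|_*$. *)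

(* Defs.v *)
From HB Require Import structures.
From mathcomp Require Import all_boot all_order all_algebra.
From mathcomp Require Import all_classical all_reals all_analysis.
Set Implicit Arguments. Unset Strict Implicit. Unset Printing Implicit Defensive.
Import Order.TTheory GRing.Theory Num.Theory.
Import numFieldNormedType.Exports.
Local Open Scope classical_set_scope.
Local Open Scope ring_scope.

Section Defs.
Variables (R : realType) (n : nat).
Notation V := 'rV[R]_n.

Definition inner (x y : V) : R := \sum_(i < n) x ord0 i * y ord0 i.

Definition is_norm (N : V -> R) : Prop :=
  [/\ forall x, N x = 0 -> x = 0,
      forall (a : R) x, N (a *: x) = `|a| * N x &
      forall x y, N (x + y) <= N x + N y].

Definition dual_norm (N : V -> R) (y : V) : R :=
  sup [set inner y x | x in [set x | N x <= 1]].

Definition grad (F : V -> R) (x : V) : V :=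
  \row_(i < n) ('d F x (delta_mx ord0 i : V)).

Definition conj (F : V -> \bar R) (y : V) : \bar R :=
  ereal_sup [set ((inner y x)%:E - F x)%E | x in [set: V]].

Definition edom (F : V -> \bar R) : set V := [set x | (F x < +oo)%E].

Definition econvex (F : V -> \bar R) : Prop :=
  forall (x y : V) (t : R), 0 <= t <= 1 ->
    (F (t *: x + (1 - t) *: y)%R <= t%:E * F x + (1 - t)%R%:E * F y)%E.

(* closed = lower semicontinuous = closed epigraph *)
Definition eclosed (F : V -> \bar R) : Prop :=
  closed [set p : V * R | (F p.1 <= p.2%:E)%E].

Definition eproper (F : V -> \bar R) : Prop :=
  (forall x, F x != -oo%E) /\ exists x, (F x < +oo)%E.

Definition strongly_convex_on (N : V -> R) (mu : R) (D : set V) (F : V -> \bar R) : Prop :=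
  forall (x y : V) (t : R), D x -> D y -> 0 <= t <= 1 ->
    (F (t *: x + (1 - t) *: y)%R <=
      t%:E * F x + (1 - t)%R%:E * F y - (mu * t * (1 - t) / 2 * N (x - y) ^+ 2)%:E)%E.

End Defs.

(* Main.v *)
Require Import Defs.
From HB Require Import structures.
From mathcomp Require Import all_boot all_order all_algebra.
From mathcomp Require Import all_classical all_reals all_analysis.
From mathcomp Require Import ring lra.
Import Order.TTheory GRing.Theory Num.Theory.
Import numFieldNormedType.Exports.
Local Open Scope classical_set_scope.
Local Open Scope ring_scope.

Lemma descent1 (R : realType) (phi dphi : R -> R) (a c : R) :
  (forall t : R, is_derive t (1:R) phi (dphi t)) ->
  (forall t, 0 < t < 1 -> dphi t <= a + t * c) ->
  phi 1 <= phi 0 + a + c / 2.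
Proof.
move=> hd hb.
pose g := fun t : R => phi t - (a * t + c / 2 * t ^+ 2).
have gd : forall t : R, is_derive t (1:R) g (dphi t - (a + c * t)).
  move=> t.
  have h1 : is_derive t (1:R) (fun s : R => a * s + c / 2 * s ^+ 2) (a + c * t).
    have := @is_derive_poly R (a *: 'X + (c / 2) *: 'X^2) t.
    have -> : (fun s : R => a * s + c / 2 * s ^+ 2) = horner (a *: 'X + (c / 2) *: 'X^2).
      by apply: funext => s; rewrite !hornerE.
    move=> H; apply: (is_derive_eq H).
    rewrite derivD derivZ derivX derivZ derivXn !hornerE /=.
    by field.
  exact: (is_deriveB (hd t) h1).
have gc : {within `[0, 1], continuous g}.
  apply: continuous_subspaceT => x.
  apply: differentiable_continuous.
  apply/derivable1_diffP.
  exact: (@ex_derive _ _ _ _ _ _ _ (gd x)).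
have [t t01 Ht] := MVT ltr01 (fun x _ => gd x) gc.
have : g 1 - g 0 <= 0.
  rewrite Ht subr0 mulr1.
  move: t01; rewrite in_itv /= => /andP[t0 t1].
  have := hb t; rewrite t0 t1 => /(_ isT).
  move=> H; lra.
rewrite /g expr1n expr0n /= !mulr0 !mulr1 !addr0 subr0.
move=> H.
lra.
Qed.

Section Helpers.
Variables (R : realType) (n : nat).
Notation V := 'rV[R]_n.
Implicit Types (x y z : V).

Lemma innerC x y : inner x y = inner y x.
Proof. by rewrite /inner; apply: eq_bigr => i _; rewrite mulrC. Qed.

Lemma innerDl x y z : inner (x + y) z = inner x z + inner y z.
Proof. by rewrite /inner -big_split; apply: eq_bigr => i _; rewrite mxE mulrDl. Qed.

Lemma innerNl x z : inner (- x) z = - inner x z.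
Proof. by rewrite /inner -sumrN; apply: eq_bigr => i _; rewrite mxE mulNr. Qed.

Lemma innerZl (a : R) x z : inner (a *: x) z = a * inner x z.
Proof. by rewrite /inner mulr_sumr; apply: eq_bigr => i _; rewrite mxE mulrA. Qed.

Lemma innerBl x y z : inner (x - y) z = inner x z - inner y z.
Proof. by rewrite innerDl innerNl. Qed.

Lemma innerDr x y z : inner z (x + y) = inner z x + inner z y.
Proof. by rewrite !(innerC z) innerDl. Qed.
Lemma innerNr x z : inner z (- x) = - inner z x.
Proof. by rewrite !(innerC z) innerNl. Qed.
Lemma innerZr (a : R) x z : inner z (a *: x) = a * inner z x.
Proof. by rewrite !(innerC z) innerZl. Qed.
Lemma innerBr x y z : inner z (x - y) = inner z x - inner z y.
Proof. by rewrite innerDr innerNr. Qed.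
Lemma inner0l z : inner 0 z = 0.
Proof. by rewrite -(scale0r 0) innerZl mul0r. Qed.
Lemma inner0r z : inner z 0 = 0.
Proof. by rewrite innerC inner0l. Qed.

Variable N : V -> R.
Hypothesis hN : is_norm N.

Lemma N0 : N 0 = 0.
Proof. case: hN => _ hZ _; by rewrite -(scale0r 0) hZ normr0 mul0r. Qed.

Lemma NN x : N (- x) = N x.
Proof. case: hN => _ hZ _; by rewrite -scaleN1r hZ normrN normr1 mul1r. Qed.

Lemma Nge0 x : 0 <= N x.
Proof.
case: hN => _ _ hT.
have := hT x (- x); rewrite subrr N0 NN => H.
lra.
Qed.

Definition Aset (d : V) := [set inner d x | x in [set x | N x <= 1]].

Lemma Aset0 d : Aset d 0.
Proof. by exists 0; rewrite /= ?N0 ?ler01 // inner0r. Qed.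

Lemma dual_ge0 d : 0 <= dual_norm N d.
Proof.
rewrite /dual_norm -/(Aset d).
have [hs|hs] := pselect (has_sup (Aset d)).
  exact: sup_upper_bound hs _ (Aset0 d).
by rewrite sup_out.
Qed.

Lemma dual_unb d : ~ has_ubound (Aset d) -> dual_norm N d = 0.
Proof. by move=> hu; rewrite /dual_norm sup_out // => -[]. Qed.

Lemma dual_bound d u : has_ubound (Aset d) -> inner d u <= N u * dual_norm N d.
Proof.
move=> hu.
have hs : has_sup (Aset d) by split => //; exists 0; exact: Aset0.
have [Nu0|Nupos] := eqVneq (N u) 0.
  by case: hN => h0 _ _; rewrite Nu0 (h0 _ Nu0) inner0r mul0r.
have Nup : 0 < N u by rewrite lt_neqAle eq_sym Nupos Nge0.
have : inner d ((N u)^-1 *: u) <= dual_norm N d.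
  apply: sup_upper_bound hs _ _; exists ((N u)^-1 *: u) => //=.
  case: hN => _ hZ _; rewrite hZ ger0_norm ?invr_ge0 ?Nge0 // mulVf //.
rewrite innerZr => H.
by rewrite -ler_pdivrMl // mulrC.
Qed.


Lemma Aset_scale c d : Aset (c *: d) = (fun r => `|c| * r) @` Aset d.
Proof.
apply/seteqP; split => r.
- case=> x /= Nx <-.
  have [c0|c0] := leP 0 c.
    by exists (inner d x); [exists x|rewrite ger0_norm // innerZl].
  exists (inner d (- x)); first by exists (- x) => //=; rewrite NN.
  by rewrite ltr0_norm // innerZl innerNr mulrNN.
- case=> _ [x /= Nx <-] <-.
  have [c0|c0] := leP 0 c.
    by exists x => //; rewrite ger0_norm // innerZl.
  exists (- x); first by rewrite /= NN.
  by rewrite ltr0_norm // innerZl innerNr mulrN mulNr.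
Qed.

Lemma sup_scale (A : set R) (k : R) : 0 <= k -> A !=set0 ->
  sup ((fun r => k * r) @` A) = k * sup A.
Proof.
move=> k0 [a Aa].
have [->|kpos] := eqVneq k 0.
  rewrite mul0r.
  have -> : (fun r => 0 * r) @` A = [set 0].
    apply/seteqP; split => r.
      by case=> b _ <-; rewrite mul0r.
    by move=> -> /=; exists a => //; rewrite mul0r.
  exact: sup1.
have kp : 0 < k by rewrite lt_neqAle eq_sym kpos.
have [hu|hu] := pselect (has_ubound A).
  have hs : has_sup A by split => //; exists a.
  have hku : has_ubound ((fun r => k * r) @` A).
    case: hu => M HM; exists (k * M) => _ [b Ab <-].
    by rewrite ler_pM2l //; apply: HM.
  have hks : has_sup ((fun r => k * r) @` A) by split => //; exists (k * a), a.
  apply/eqP; rewrite eq_le; apply/andP; split.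
    apply: ge_sup; first by exists (k * a), a.
    move=> _ [b Ab <-]; rewrite ler_pM2l //; exact: sup_upper_bound.
  rewrite -ler_pdivlMl //; apply: ge_sup; first by exists a.
  move=> b Ab; rewrite ler_pdivlMl //.
  by apply: sup_upper_bound hks _ _; exists b.
rewrite !sup_out ?mulr0 //.
  by case.
case=> _ [M HM]; apply: hu; exists (M / k) => b Ab.
by rewrite ler_pdivlMr // mulrC; apply: HM; exists b.
Qed.

Lemma dual_scale c d : dual_norm N (c *: d) = `|c| * dual_norm N d.
Proof.
rewrite /dual_norm -!/(Aset _) Aset_scale sup_scale //; exists 0; exact: Aset0.
Qed.


Lemma diff_inner (F : V -> R) x v : 'd F x v = inner (grad F x) v.
Proof.
rewrite {1}(row_sum_delta v) linear_sum /inner; apply: eq_bigr => i _.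
by rewrite linearZ /= mxE mulrC.
Qed.

Lemma descentV (F : V -> R) y d (a c : R) : (forall x, differentiable F x) ->
  (forall t, 0 < t < 1 -> 'd F (y + t *: d) d <= a + t * c) ->
  F (y + d) <= F y + a + c / 2.
Proof.
move=> hF hb.
pose phi := fun t : R => F (y + t *: d).
have hd : forall t : R, is_derive t (1:R) phi ('d F (y + t *: d) d).
  move=> t.
  have E : (fun h : R => h^-1 *: ((phi \o shift t) (h *: 1) - phi t)) =
           (fun h : R => h^-1 *: ((F \o shift (y + t *: d)) (h *: d) - F (y + t *: d))).
    apply: funext => h; rewrite /phi /= /shift /=.
    congr (_ *: (F _ - _)).
    by rewrite -[h%:A]/(h * 1) mulr1 scalerDl addrCA addrC.
  apply: DeriveDef.
    rewrite /derivable E; exact: diff_derivable.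
  by rewrite /derive E -/(derive _ _ _) deriveE.
have := @descent1 R phi _ a c hd hb.
by rewrite /phi scale1r scale0r addr0.
Qed.


Lemma descentL (F : V -> R) (al : R) y d : 0 < al ->
  (forall x, differentiable F x) ->
  (forall y1 y2, N (grad F y1 - grad F y2) <= al^-1 * dual_norm N (y1 - y2)) ->
  F (y + d) <= F y + inner (grad F y) d + (dual_norm N d ^+ 2 / al) / 2.
Proof.
move=> alp hF hL.
apply: descentV => // t /andP[t0 t1].
rewrite diff_inner.
set u := grad F (y + t *: d) - grad F y.
have -> : grad F (y + t *: d) = grad F y + u by rewrite /u [RHS]addrC subrK.
rewrite innerDl lerD2l.
have hu : N u <= al^-1 * (t * dual_norm N d).
  have := hL (y + t *: d) y.
  have -> : y + t *: d - y = t *: d by rewrite addrAC subrr add0r.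
  by rewrite dual_scale ger0_norm ?(ltW t0).
have D0 := dual_ge0 d.
have [hb|hb] := pselect (has_ubound (Aset d)).
  rewrite innerC; apply: le_trans (dual_bound d u hb) _.
  apply: le_trans (ler_wpM2r D0 hu) _.
  rewrite expr2 le_eqVlt; apply/orP; left; apply/eqP.
  have al0 : al != 0 by exact: lt0r_neq0.
  by field.
have D00 := dual_unb d hb.
move: hu; rewrite D00 !mulr0 => hu.
have Nu0 : N u = 0 by apply/eqP; rewrite eq_le hu Nge0.
by case: hN => h0 _ _; rewrite (h0 _ Nu0) inner0l expr2 mulr0 !mul0r mulr0.
Qed.


End Helpers.

Theorem lemmaB3 (R : realType) (n : nat)
  (N : 'rV[R]_n -> R) (f : 'rV[R]_n -> R) (h w : 'rV[R]_n -> \bar R) (L alpha : R)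
  (z zbar : nat -> 'rV[R]_n) :
  (* ||.|| is a norm, ||.||_* its dual *)
  is_norm N ->
  (* f convex, differentiable, L-smooth w.r.t. ||.|| *)
  0 < L ->
  (forall (x y : 'rV[R]_n) (t : R), 0 <= t <= 1 ->
      f (t *: x + (1 - t) *: y) <= t * f x + (1 - t) * f y) ->
  (forall x, differentiable f x) ->
  (forall x y, dual_norm N (grad f x - grad f y) <= L * N (x - y)) ->
  (* h closed proper convex with bounded domain *)
  eclosed h -> eproper h -> econvex h ->
  (exists M : R, forall x, edom h x -> N x <= M) ->
  (* w : R^n -> [0, +oo], closed, 1-strongly convex on dom h, bounded on dom h *)
  (forall x, (0 <= w x)%E) -> eclosed w ->
  strongly_convex_on N 1 (edom h) w ->
  (exists M : R, forall x, edom h x -> (w x <= M%:E)%E) ->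
  0 < alpha ->
  let halpha := fun x => (h x + alpha%:E * w x)%E in
  let Hc := fun y => fine (conj halpha y) in
  (* standing facts from the context: (h^alpha)^* is (finite and) differentiable
     with (1/alpha)-Lipschitz gradient w.r.t. ||.||_*, and f^* is (1/L)-strongly
     convex w.r.t. ||.||_* *)
  (forall y, conj halpha y \is a fin_num) ->
  (forall y, differentiable Hc y) ->
  (forall y1 y2, N (grad Hc y1 - grad Hc y2) <= alpha^-1 * dual_norm N (y1 - y2)) ->
  strongly_convex_on (dual_norm N) L^-1 [set: 'rV[R]_n] (conj (fun x => (f x)%:E)) ->
  let fs := conj (fun x => (f x)%:E) in
  let psi := fun y => (conj halpha (- y) + fs y)%E in
  let eta := alpha / (L + alpha) in
  let S := fun y => ereal_sup [set ((inner (- grad Hc (- y)) (y - v))%:E + fs y - fs v)%E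
                               | v in [set: 'rV[R]_n]] in
  (* GCG iteration *)
  edom fs (z 0) ->
  (forall k v, ((inner (- grad Hc (- z k)) (zbar k))%:E + fs (zbar k)
                 <= (inner (- grad Hc (- z k)) v)%:E + fs v)%E) ->
  (forall k, z k.+1 = eta *: zbar k + (1 - eta) *: z k) ->
  forall k, (psi (z k.+1) <= psi (z k) - eta%:E * S (z k))%E.
Proof.
move=> hN L0 fconv fdiff fsmooth hcl hpr hcv hbd w0 wcl wsc wbd al0 halpha Hc
  Hfin Hdiff HL fsc fs psi eta S z0 hmin hz.
have fsc' : strongly_convex_on (dual_norm N) L^-1 setT fs := fsc.
have La : 0 < L + alpha by rewrite addr_gt0.
have eta0 : 0 < eta by rewrite /eta divr_gt0.
have eta1 : eta < 1 by rewrite /eta ltr_pdivrMr // mul1r ltrDr.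
have fsNy : forall y, (-oo < fs y)%E.
  move=> y; apply: (@lt_le_trans _ _ (inner y 0 - f 0)%:E); first exact: ltNyr.
  by apply: ereal_sup_ubound; exists 0.
have hzbf : forall k, fs (z k) \is a fin_num -> fs (zbar k) \is a fin_num.
  move=> k IH.
  apply: fin_real; rewrite fsNy /=.
  have := hmin k (z k); rewrite -(fineK IH) -EFinD.
  case E: (fs (zbar k)) => [r| |] //; first by move=> _; exact: ltry.
have hfin : forall k, fs (z k) \is a fin_num.
  elim=> [|k IH]; first by apply: fin_real; rewrite fsNy z0.
  have hzb := hzbf k IH.
  have := fsc' (zbar k) (z k) eta I I; rewrite (ltW eta0) (ltW eta1) /= => /(_ isT).
  rewrite -hz -(fineK IH) -(fineK hzb) => H.
  apply: fin_real; rewrite fsNy /=; apply: le_lt_trans H _.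
  by rewrite -!EFinM -!EFinD; exact: ltry.
move=> k.
have IH := hfin k.
have hzb := hzbf k IH.
have hc := hfin k.+1.
set a := fine (fs (z k)). have Ea : fs (z k) = a%:E by rewrite /a fineK.
set b := fine (fs (zbar k)). have Eb : fs (zbar k) = b%:E by rewrite /b fineK.
set c := fine (fs (z k.+1)). have Ec : fs (z k.+1) = c%:E by rewrite /c fineK.
have Hf := fsc' (zbar k) (z k) eta I I.
move: Hf; rewrite (ltW eta0) (ltW eta1) /= => /(_ isT).
rewrite -hz Ea Eb Ec -!EFinM -!EFinD lee_fin => Hf.
have EH : forall y, conj halpha y = (Hc y)%:E by move=> y; rewrite /Hc fineK.
have HSd : S (z k) = (inner (- grad Hc (- z k)) (z k - zbar k) + a - b)%:E.
  apply/eqP; rewrite eq_le; apply/andP; split.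
    apply: ge_ereal_sup => _ [v _ <-].
    rewrite Ea.
    have := fsNy v.
    case Ev: (fs v) => [r| |] // _.
      rewrite lee_fin.
      have := hmin k v; rewrite Ev Eb -!EFinD lee_fin => Hm.
      rewrite !innerBr; lra.
    by rewrite /=; exact: leNye.
  apply: ereal_sup_ubound; exists (zbar k) => //.
  by rewrite Ea Eb.
have HD := @descentL R n N hN Hc alpha (- z k) (eta *: (z k - zbar k)) al0 Hdiff HL.
have Ez : - z k.+1 = - z k + eta *: (z k - zbar k).
  by rewrite hz; apply/rowP => i; rewrite !mxE; ring.
have ED : dual_norm N (eta *: (z k - zbar k)) = eta * dual_norm N (zbar k - z k).
  have -> : z k - zbar k = (-1) *: (zbar k - z k) by rewrite scaleN1r opprB.
  by rewrite !dual_scale // normrN1 mul1r ger0_norm // ltW.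
rewrite ED innerZr in HD.
rewrite /psi Ez !EH HSd Ea Ec -!EFinM -!EFinD lee_fin.
rewrite innerNl.
have key : (eta * dual_norm N (zbar k - z k)) ^+ 2 / alpha / 2 =
   L^-1 * eta * (1 - eta) / 2 * dual_norm N (zbar k - z k) ^+ 2.
  rewrite /eta; field.
  by rewrite !lt0r_neq0.
rewrite key in HD.
lra.
Qed.
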